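(* The Waterfilling Mechanism (with exact bucketing) described in the context satisfies the Sharing Incentive: for every nonempty finite set $S$ of analysts (each with workload $W_l$, weight $s_l>0$ and strategy $A_l$ satisfying $W_l=W_lA_l^+A_l$ with every column of $A_l$ of $L_1$ norm $1$) and every $i\in S$, $\mathrm{Err}_i(S)\le \mathrm{Err}_i(\{i\})$, i.e. analyst $i$'s expected error when all analysts in $S$ are served jointly with total budget $(\sum_{l\in S}s_l)\varepsilon$ is at most its expected error when served alone by the same mechanism with budget $s_i\varepsilon$.
   Context: Data are a vector $x\in\mathbb{R}^n$. Fix $\varepsilon>0$. Each analyst $l$ has a workload matrix $W_l$, a weight $s_l>0$ (entitled to budget $s_l\varepsilon$), and a strategy matrix $A_l$ chosen for $W_l$ alone by a selection step, with $W_l = W_lA_l^+A_l$ ($^+$ the Moore–Penrose pseudo-inverse) and every column of $A_l$ of $L_1$ norm $1$. Fix a norm $\|\cdot\|$ on row vectors. Waterfilling Mechanism for a collective $S$: maintain buckets $B$ (unit vectors $e$ with weights $f_B(e)>0$), initially empty; for each $l\in S$ and each nonzero row $v$ of $s_lA_l$, set $e=v/\|v\|$; if $e\in B$ increase $f_B(e)$ by $\|v\|$, else add $e$ with $f_B(e)=\|v\|$. The joint strategy $A$ has rows $f_B(e)e$, $e\in B$. With $\varepsilon_S=(\sum_{l\in S}s_l)\varepsilon$, release $y=Ax+\eta$, $\eta$ i.i.d. Laplace of scale $\|A\|_1/\varepsilon_S$ ($\|A\|_1$ = maximum column $L_1$ norm). Analyst $i$ estimates $W_ix$ by $W_iA^+y$,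 with expected error $\mathrm{Err}_i(S)=\frac{2\|A\|_1^2}{\varepsilon_S^2}\|W_iA^+\|_F^2$. *)

(* Defs.v *)
From HB Require Import structures.
From Stdlib Require Import ClassicalEpsilon.
From mathcomp Require Import all_boot all_order all_algebra.
From mathcomp Require Import reals.
Set Implicit Arguments. Unset Strict Implicit. Unset Printing Implicit Defensive.
Import Order.TTheory GRing.Theory Num.Theory.
Local Open Scope ring_scope.

Section Defs.
Variable R : realType.

Definition is_norm (n : nat) (N : 'rV[R]_n -> R) : Prop :=
  [/\ forall v, 0 <= N v,
      forall v, N v = 0 -> v = 0,
      forall (c : R) v, N (c *: v) = `|c| * N v
    & forall u v, N (u + v) <= N u + N v].

(* The four Penrose conditions (real matrices, so adjoint = transpose). *)
Definition penrose (m n : nat) (A : 'M[R]_(m, n)) (X : 'M[R]_(n, m)) : Prop :=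
  [/\ A *m X *m A = A, X *m A *m X = X,
      (A *m X)^T = A *m X & (X *m A)^T = X *m A].

(* Moore-Penrose pseudo-inverse (exists and is unique over the reals). *)
Definition mpinv (m n : nat) (A : 'M[R]_(m, n)) : 'M[R]_(n, m) :=
  epsilon (inhabits 0) (fun X => penrose A X).

Definition norm1 (m n : nat) (A : 'M[R]_(m, n)) : R :=
  \big[Num.max/0]_(j < n) \sum_(i < m) `|A i j|.

Definition frob2 (m n : nat) (A : 'M[R]_(m, n)) : R :=
  \sum_(i < m) \sum_(j < n) (A i j) ^+ 2.

Variable n : nat.
Variable N : 'rV[R]_n -> R.

(* Buckets: a list of (unit vector e, weight f_B(e)). Add a unit vector e
   with weight w: merge if e already present, else append. *)
Fixpoint bucket_add (B : seq ('rV[R]_n * R)) (e : 'rV[R]_n) (w : R)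
  : seq ('rV[R]_n * R) :=
  match B with
  | [::] => [:: (e, w)]
  | (e', f) :: B' => if e' == e then (e', f + w) :: B'
                     else (e', f) :: bucket_add B' e w
  end.

Definition bucket_insert (B : seq ('rV[R]_n * R)) (v : 'rV[R]_n) :=
  bucket_add B ((N v)^-1 *: v) (N v).

Variables (I : finType) (k : I -> nat) (s : I -> R).
Variable A : forall l : I, 'M[R]_(k l, n).

Definition wf_rows (S : {set I}) : seq 'rV[R]_n :=
  flatten [seq [seq row j (s l *: A l) | j <- enum 'I_(k l)
                                        & row j (s l *: A l) != 0]
          | l <- enum S].

Definition wf_buckets (S : {set I}) : seq ('rV[R]_n * R) :=
  foldl bucket_insert [::] (wf_rows S).

Definition wf_strategy (S : {set I}) : 'M[R]_(size (wf_buckets S), n) :=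
  \matrix_(r < size (wf_buckets S))
     ((nth (0, 0) (wf_buckets S) r).2 *: (nth (0, 0) (wf_buckets S) r).1).

Variable eps : R.
Variable p : I -> nat.
Variable W : forall l : I, 'M[R]_(p l, n).

Definition eps_S (S : {set I}) : R := (\sum_(l in S) s l) * eps.

Definition Err (S : {set I}) (i : I) : R :=
  2 * (norm1 (wf_strategy S)) ^+ 2 / (eps_S S) ^+ 2
    * frob2 (W i *m mpinv (wf_strategy S)).

End Defs.

(* Main.v *)
Require Import Defs.
From HB Require Import structures.
From Stdlib Require Import ClassicalEpsilon.
From mathcomp Require Import all_boot all_order all_algebra.
From mathcomp Require Import reals.
From mathcomp Require Import ring lra.
Set Implicit Arguments. Unset Strict Implicit. Unset Printing Implicit Defensive.
Import Order.TTheory GRing.Theory Num.Theory.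
Local Open Scope ring_scope.

Section MP.
Variable R : realType.

Lemma frob2_tr m n (M : 'M[R]_(m, n)) : frob2 M = \tr (M *m M^T).
Proof.
rewrite /frob2 /mxtrace; apply: eq_bigr => i _; rewrite mxE.
by apply: eq_bigr => j _; rewrite mxE expr2.
Qed.

Lemma frob2_ge0 m n (M : 'M[R]_(m, n)) : 0 <= frob2 M.
Proof. by apply: sumr_ge0 => i _; apply: sumr_ge0 => j _; apply: sqr_ge0. Qed.

Lemma frob2_eq0 m n (M : 'M[R]_(m, n)) : frob2 M = 0 -> M = 0.
Proof.
move=> H; apply/matrixP => i j; rewrite mxE.
have /eqP := H; rewrite psumr_eq0; last by move=> a _; apply: sumr_ge0 => b _; apply: sqr_ge0.
move=> /allP /(_ i (mem_index_enum _)) /implyP /(_ isT) /eqP.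
move/eqP; rewrite psumr_eq0; last by move=> b _; apply: sqr_ge0.
by move=> /allP /(_ j (mem_index_enum _)) /implyP /(_ isT); rewrite sqrf_eq0 => /eqP.
Qed.

Lemma gram_unit r n (G : 'M[R]_(r, n)) : row_free G -> G *m G^T \in unitmx.
Proof.
move=> fG; rewrite -row_free_unit -kermx_eq0; apply/eqP/row_matrixP => j.
rewrite row0; set u := row j (kermx (G *m G^T)).
have hu : u *m (G *m G^T) = 0 by rewrite /u -row_mul mulmx_ker row0.
have h2 : frob2 (u *m G) = 0.
  by rewrite frob2_tr trmx_mul mulmxA -(mulmxA u) hu mul0mx /mxtrace big1 // => i _; rewrite mxE.
have := frob2_eq0 h2 => /eqP; rewrite -(mul0mx _ G) => /eqP /(row_free_inj fG) //.
Qed.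

Lemma mp_factor m n r (A : 'M[R]_(m, n)) (C : 'M[R]_(m, r)) (F : 'M[R]_(r, n)) :
  A = C *m F -> F *m F^T \in unitmx -> C^T *m C \in unitmx -> exists X, penrose A X.
Proof.
move=> hA uF uC.
set P := invmx (F *m F^T); set Q := invmx (C^T *m C).
exists (F^T *m P *m Q *m C^T).
have e1 : F *m F^T *m P = 1%:M by rewrite mulmxV.
have e2 : Q *m (C^T *m C) = 1%:M by rewrite mulVmx.
have AX : A *m (F^T *m P *m Q *m C^T) = C *m Q *m C^T.
  by rewrite hA !mulmxA -(mulmxA C F) -(mulmxA C (F *m F^T)) e1 mulmx1.
have XA : (F^T *m P *m Q *m C^T) *m A = F^T *m P *m F.
  by rewrite hA -!mulmxA (mulmxA C^T) (mulmxA Q) e2 mul1mx.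
have PT : P^T = P by rewrite /P trmx_inv trmx_mul trmxK.
have QT : Q^T = Q by rewrite /Q trmx_inv trmx_mul trmxK.
split.
- by rewrite AX hA -!mulmxA (mulmxA C^T) (mulmxA Q) e2 mul1mx.
- by rewrite XA -!mulmxA (mulmxA F) (mulmxA (F *m F^T)) e1 mul1mx.
- by rewrite AX !trmx_mul trmxK QT mulmxA.
- by rewrite XA !trmx_mul trmxK PT mulmxA.
Qed.

Lemma mp_exists m n (A : 'M[R]_(m, n)) : exists X, penrose A X.
Proof.
apply: (@mp_factor _ _ _ A (col_base A) (row_base A)).
- by rewrite mulmx_base.
- by apply: gram_unit; apply: row_base_free.
- have := gram_unit (G := (col_base A)^T); rewrite trmxK; apply.
  by rewrite /row_free mxrank_tr; apply: col_base_full.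
Qed.

Lemma mpinvP m n (A : 'M[R]_(m, n)) : penrose A (mpinv A).
Proof. rewrite /mpinv; case: (mp_exists A) => X hX; exact: (epsilon_spec (inhabits 0) _ (ex_intro _ X hX)). Qed.

Lemma minnorm p m n (A : 'M[R]_(m, n)) (X : 'M[R]_(n, m)) (Y : 'M[R]_(p, m)) :
  penrose A X -> frob2 (Y *m A *m X) <= frob2 Y.
Proof.
case=> h1 h2 h3 h4.
set P := A *m X.
have PP : P *m P = P by rewrite /P mulmxA h1.
have hQ : P *m (1%:M - P) = 0 by rewrite mulmxBr mulmx1 PP subrr.
have hQ' : (1%:M - P) *m P = 0 by rewrite mulmxBl mul1mx PP subrr.
have QT : (1%:M - P)^T = 1%:M - P by rewrite linearB /= trmx1 h3.
have PT : P^T = P by rewrite /P h3.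
set Q := 1%:M - P in hQ hQ' QT *.
have eY : Y = Y *m P + Y *m Q by rewrite -mulmxDr /Q addrC subrK mulmx1.
have -> : frob2 Y = frob2 (Y *m P) + frob2 (Y *m Q).
  rewrite !frob2_tr.
  clearbody Q P.
  rewrite {1 2}eY [(_ + _)^T]raddfD /= mulmxDl !mulmxDr !mxtraceD.
  rewrite !trmx_mul PT QT -!mulmxA (mulmxA P Q) hQ (mulmxA Q P) hQ' !mul0mx !mulmx0.
  by rewrite mxtrace0 !addr0 add0r.
rewrite -mulmxA -/P lerDl; exact: frob2_ge0.
Qed.
End MP.

Section Buckets.
Variable R : realType.
Variable n : nat.
Variable N : 'rV[R]_n -> R.
Implicit Type B : seq ('rV[R]_n * R).

Definition wt B x := \sum_(b <- B | b.1 == x) b.2.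
Definition cs B (j : 'I_n) := \sum_(b <- B) `|b.2 * b.1 0 j|.
Definition posb B := all (fun b => 0 < b.2) B.

Lemma mem_add B e w x : (x \in map fst (bucket_add B e w)) = (x == e) || (x \in map fst B).
Proof.
elim: B => [|[e' f] B IH] /=; first by rewrite in_cons orbF.
case: ifP => /eqP he /=; rewrite !in_cons ?IH.
  by subst e'; case: (x == e); rewrite ?orbT.
by case: (x == e); case: (x == e'); rewrite ?orbT.
Qed.

Lemma uniq_add B e w : uniq (map fst B) -> uniq (map fst (bucket_add B e w)).
Proof.
elim: B => [|[e' f] B IH] //= /andP [nB uB].
case: ifP => /eqP he /=; first by rewrite nB.
rewrite IH // andbT mem_add negb_or nB andbT; by apply/eqP.
Qed.

Lemma pos_add B e w : 0 < w -> posb B -> posb (bucket_add B e w).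
Proof.
move=> hw; elim: B => [|[e' f] B IH] /=; first by rewrite hw.
move=> /andP [hf hB]; case: ifP => _ /=; first by rewrite hB andbT addr_gt0.
by rewrite hf IH.
Qed.

Lemma wt_add B e w x : wt (bucket_add B e w) x = wt B x + (if x == e then w else 0).
Proof.
rewrite /wt; elim: B => [|[e' f] B IH] /=.
  by rewrite big_cons big_nil /= eq_sym; case: ifP => _; rewrite ?addr0 ?add0r.
case: ifP => /eqP he; rewrite !big_cons /=.
  by subst e'; rewrite [x == e]eq_sym; case: (e == x); rewrite ?addr0 // addrAC.
by rewrite IH; case: ifP => _; rewrite ?addrA.
Qed.

Lemma cs_add B e w j : 0 <= w -> posb B -> cs (bucket_add B e w) j = cs B j + `|w * e 0 j|.
Proof.
move=> hw; rewrite /cs; elim: B => [|[e' f] B IH] /=.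
  by rewrite !big_cons !big_nil add0r addr0.
move=> /andP [hf hB]; case: ifP => /eqP he; rewrite !big_cons /=.
  subst e'; rewrite normrM (ger0_norm (addr_ge0 (ltW hf) hw)) mulrDl !normrM.
  by rewrite (ger0_norm (ltW hf)) (ger0_norm hw) addrAC.
by rewrite IH // addrA.
Qed.

Lemma wt_nth B x : uniq (map fst B) -> x \in map fst B ->
  wt B x = (nth (0, 0) B (index x (map fst B))).2.
Proof.
rewrite /wt; elim: B => [|[e' f] B IH] //= /andP [nB uB].
rewrite in_cons big_cons /= eq_sym; case: eqP => [<-|hne] /=.
  move=> _; rewrite big_seq_cond big1 ?addr0 // => b /andP [hb /eqP hb1].
  by exfalso; move: nB; rewrite -hb1 (map_f fst hb).
move=> hx; rewrite IH //.
Qed.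

Lemma nth_index_fst B x : x \in map fst B -> (nth (0, 0) B (index x (map fst B))).1 = x.
Proof.
move=> hx; have hs : (index x (map fst B) < size B)%N by rewrite -(size_map fst) index_mem.
by rewrite -(nth_map _ 0) // nth_index.
Qed.

Definition nz (v : 'rV[R]_n) := (N v)^-1 *: v.

Hypothesis Npos : forall v, v != 0 -> 0 < N v.

Lemma fold_props B0 vs : all (fun v => v != 0) vs -> posb B0 -> uniq (map fst B0) ->
  let B := foldl (bucket_insert N) B0 vs in
  [/\ posb B, uniq (map fst B),
      forall j, cs B j = cs B0 j + \sum_(v <- vs) `|v 0 j|,
      forall x, wt B x = wt B0 x + \sum_(v <- vs | nz v == x) N v
    & forall x, x \in map fst B0 -> x \in map fst B].
Proof.
elim: vs B0 => [|v vs IH] B0 /=.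
  by move=> _ hp hu; split=> // [j|x]; rewrite big_nil addr0.
move=> /andP [hv hvs] hp hu.
have hN := Npos hv.
have [] := IH (bucket_insert N B0 v) hvs (@pos_add B0 (nz v) (N v) hN hp) (@uniq_add B0 (nz v) (N v) hu).
move=> h1 h2 h3 h4 h5; split => //.
- move=> j; rewrite h3 cs_add ?(ltW hN) // big_cons -addrA; congr (_ + _); congr (_ + _).
  by rewrite mxE mulrA mulrV ?unitfE ?gt_eqF // mul1r.
- move=> x; rewrite h4 /bucket_insert wt_add big_cons -addrA; congr (_ + _).
  rewrite /nz eq_sym; case: ifP => _ //; by rewrite add0r.
- by move=> x hx; apply: h5; rewrite /bucket_insert mem_add hx orbT.
Qed.

Lemma fold_keep B0 vs x : x \in map fst B0 -> x \in map fst (foldl (bucket_insert N) B0 vs).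
Proof.
elim: vs B0 => [|v vs IH] B0 //= hx; apply: IH.
by rewrite /bucket_insert mem_add hx orbT.
Qed.

Lemma fold_mem B0 vs v : v \in vs -> nz v \in map fst (foldl (bucket_insert N) B0 vs).
Proof.
elim: vs B0 => [|v' vs IH] B0 //=; rewrite in_cons => /orP [/eqP ->|hin]; last exact: IH.
by apply: fold_keep; rewrite /bucket_insert mem_add eqxx.
Qed.
End Buckets.

Section Main.
Variable R : realType.
Variable n : nat.
Variable N : 'rV[R]_n -> R.
Hypothesis HN : is_norm N.
Variables (I : finType) (k : I -> nat) (s : I -> R).
Variable A : forall l : I, 'M[R]_(k l, n).

Definition Lr l := [seq row j (s l *: A l) | j <- enum 'I_(k l) & row j (s l *: A l) != 0].

Lemma wf_rowsE S : wf_rows s A S = flatten [seq Lr l | l <- enum S].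
Proof. by []. Qed.

Lemma Npos' v : v != 0 -> 0 < N v.
Proof.
case: HN => h0 h1 _ _ hv; rewrite lt_def h0 andbT; apply/eqP => /h1 hv0.
by rewrite hv0 eqxx in hv.
Qed.

Lemma Nge0 v : 0 <= N v. Proof. by case: HN. Qed.

Lemma rows_nz S : all (fun v => v != 0) (wf_rows s A S).
Proof.
apply/allP => v /flattenP [L' /mapP [l _ ->]] /mapP [j]; rewrite mem_filter => /andP [h _] ->.
exact: h.
Qed.

Lemma sum_Lr (F : 'rV[R]_n -> R) l :
  \sum_(v <- Lr l) F v = \sum_(j < k l | row j (s l *: A l) != 0) F (row j (s l *: A l)).
Proof. by rewrite /Lr big_map big_filter big_enum_cond; apply: eq_bigl. Qed.


Lemma bk_props S : let B := wf_buckets N s A S in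
  [/\ posb B, uniq (map fst B),
      forall j, cs B j = \sum_(v <- wf_rows s A S) `|v 0 j|
    & forall x, wt B x = \sum_(v <- wf_rows s A S | nz N v == x) N v].
Proof.
have [h1 h2 h3 h4 _] := @fold_props R n N Npos' [::] (wf_rows s A S) (rows_nz S) erefl erefl.
split => // [j|x]; [rewrite h3 | rewrite h4]; by rewrite /cs /wt big_nil add0r.
Qed.

Lemma colsum (S : {set I}) (Hs : forall l, l \in S -> 0 < s l)
  (Hcol : forall l, l \in S -> forall j : 'I_n, \sum_(r < k l) `|A l r j| = 1) (j : 'I_n) :
  \sum_(v <- wf_rows s A S) `|v 0 j| = \sum_(l in S) s l.
Proof.
rewrite wf_rowsE big_flatten big_map big_enum /=; apply: eq_bigr => l hl.
rewrite sum_Lr big_mkcond /=.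
transitivity (s l * \sum_(r < k l) `|A l r j|); last by rewrite Hcol // mulr1.
rewrite mulr_sumr; apply: eq_bigr => r _.
case: ifP => [_|/negbFE /eqP h].
  by rewrite !mxE normrM gtr0_norm ?Hs.
have := congr1 (fun M : 'rV_n => M 0 j) h; rewrite !mxE => /eqP.
by rewrite mulf_eq0 (gt_eqF (Hs l hl)) /= => /eqP ->; rewrite normr0 mulr0.
Qed.

Lemma bigmax_const (c : R) m : 0 <= c ->
  \big[Num.max/0]_(j < m) c = if m is 0 then 0 else c.
Proof.
move=> hc; case: m => [|m]; first by rewrite big_ord0.
have H : forall m, \big[Num.max/0]_(j < m.+1) c = c.
  move=> m'; elim: m' => [|m' IH].
    by rewrite big_ord_recl big_ord0 /= max_l.
  by rewrite big_ord_recl IH /= max_l.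
exact: H.
Qed.

Lemma colsum_strat (S : {set I}) (j : 'I_n) :
  \sum_(r < size (wf_buckets N s A S)) `|wf_strategy N s A S r j| = cs (wf_buckets N s A S) j.
Proof.
rewrite /cs (big_nth (0, 0)) big_mkord; apply: eq_bigr => r _.
by rewrite !mxE.
Qed.

Lemma norm1_wf (S : {set I}) (Hs : forall l, l \in S -> 0 < s l)
  (Hcol : forall l, l \in S -> forall j : 'I_n, \sum_(r < k l) `|A l r j| = 1) :
  norm1 (wf_strategy N s A S) = if n is 0 then 0 else \sum_(l in S) s l.
Proof.
rewrite /norm1.
have [_ _ h3 _] := bk_props S.
under eq_bigr => j _ do rewrite colsum_strat h3 colsum //.
by apply: bigmax_const; apply: sumr_ge0 => l hl; apply: ltW; apply: Hs.
Qed.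

Lemma frob_inj p a b (phi : 'I_a -> 'I_b) (c : 'I_a -> R) (X : 'M[R]_(p, a)) :
  injective phi -> (forall r, c r ^+ 2 <= 1) ->
  frob2 (X *m \matrix_(r, q) (if q == phi r then c r else 0)) <= frob2 X.
Proof.
move=> iphi hc; set D := \matrix_(r, q) _.
rewrite /frob2; apply: ler_sum => a0 _.
have E q : ((X *m D) a0 q) ^+ 2 = \sum_r (X a0 r * D r q) ^+ 2.
  rewrite mxE; case: (pickP (fun r => phi r == q)) => [r0 /eqP hr0 | hn].
    have Z r : r != r0 -> D r q = 0.
      move=> hr; rewrite mxE; case: eqP => // hq; case/negP: hr; apply/eqP.
      by apply: iphi; rewrite -hq hr0.
    rewrite (bigD1 r0) //= big1 ?addr0; last by move=> r hr; rewrite Z // mulr0.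
    rewrite [RHS](bigD1 r0) //= big1 ?addr0 // => r hr.
    by rewrite Z // mulr0 expr0n.
  have Z r : D r q = 0 by rewrite mxE; case: eqP => // hq; move: (hn r); rewrite hq eqxx.
  rewrite !big1 ?expr0n // => r _; by rewrite Z mulr0 // expr0n.
under eq_bigr do rewrite E.
rewrite exchange_big /=; apply: ler_sum => r _.
rewrite (bigD1 (phi r)) //= big1 ?addr0; last first.
  by move=> q hq; rewrite mxE (negbTE hq) mulr0 expr0n.
rewrite mxE eqxx exprMn; apply: ler_piMr; [exact: sqr_ge0 | exact: hc].
Qed.

Lemma wt_notin (B : seq ('rV[R]_n * R)) (x : 'rV[R]_n) : x \notin map fst B -> wt B x = 0.
Proof.
move=> hx; rewrite /wt big_seq_cond big1 // => b /andP [hb /eqP hb1].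
by move: hx; rewrite -hb1 (map_f fst hb).
Qed.

Lemma wt_le (S : {set I}) i (Hi : i \in S) x :
  wt (wf_buckets N s A [set i]) x <= wt (wf_buckets N s A S) x.
Proof.
have [_ _ _ h4] := bk_props S; have [_ _ _ h4'] := bk_props [set i].
rewrite h4 h4' !wf_rowsE enum_set1 !big_flatten !big_map big_seq1 /=.
rewrite (bigD1_seq i) ?mem_enum ?enum_uniq //= lerDl.
by apply: sumr_ge0 => l _; apply: sumr_ge0 => v _; apply: Nge0.
Qed.

Lemma exists_D (S : {set I}) i (Hi : i \in S) :
  exists D : 'M[R]_(size (wf_buckets N s A [set i]), size (wf_buckets N s A S)),
   D *m wf_strategy N s A S = wf_strategy N s A [set i] /\
   forall p (X : 'M[R]_(p, size (wf_buckets N s A [set i]))), frob2 (X *m D) <= frob2 X.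
Proof.
set Bi := wf_buckets N s A [set i]; set Bs := wf_buckets N s A S.
have [pi ui _ _] := bk_props [set i]; have [ps us _ _] := bk_props S.
rewrite -/Bi -/Bs in pi ui ps us.
have hfi (r : 'I_(size Bi)) : 0 < (nth (0, 0) Bi r).2.
  by have := allP pi _ (mem_nth (0, 0) (ltn_ord r)).
have hxr (r : 'I_(size Bi)) : (nth (0, 0) Bi r).1 = nth 0 (map fst Bi) r.
  by rewrite (nth_map (0, 0)).
have hmi (r : 'I_(size Bi)) : (nth (0, 0) Bi r).1 \in map fst Bi.
  by rewrite hxr mem_nth // size_map.
have hidx (r : 'I_(size Bi)) : index (nth (0, 0) Bi r).1 (map fst Bi) = r.
  by rewrite hxr index_uniq // size_map.
have wti (r : 'I_(size Bi)) : wt Bi (nth (0, 0) Bi r).1 = (nth (0, 0) Bi r).2.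
  by rewrite (wt_nth ui (hmi r)) hidx.
have hmem (r : 'I_(size Bi)) : (nth (0, 0) Bi r).1 \in map fst Bs.
  apply/negPn/negP => hn; have := wt_le Hi (nth (0, 0) Bi r).1.
  by rewrite -/Bi -/Bs (wt_notin hn) wti leNgt hfi.
have hphi (r : 'I_(size Bi)) : (index (nth (0%R, 0%R) Bi r).1 (map fst Bs) < size Bs)%N.
  by rewrite -(size_map fst Bs) index_mem.
pose phi (r : 'I_(size Bi)) : 'I_(size Bs) := Ordinal (hphi r).
have hkey r : (nth (0, 0) Bs (phi r)).1 = (nth (0, 0) Bi r).1 by rewrite nth_index_fst.
have hg r : (nth (0, 0) Bs (phi r)).2 = wt Bs (nth (0, 0) Bi r).1 by rewrite (wt_nth us (hmem r)).
have hge (r : 'I_(size Bi)) : (nth (0, 0) Bi r).2 <= (nth (0, 0) Bs (phi r)).2.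
  by rewrite hg -wti; apply: wt_le.
have hgp (r : 'I_(size Bi)) : 0 < (nth (0, 0) Bs (phi r)).2 by apply: lt_le_trans (hge r).
have iphi : injective phi.
  move=> r1 r2 /(congr1 val) /= h.
  have : (nth (0, 0) Bs (phi r1)).1 = (nth (0, 0) Bs (phi r2)).1 by rewrite /phi /= h.
  rewrite !hkey !hxr => /eqP; rewrite nth_uniq ?size_map // => /eqP h2.
  exact: val_inj.
pose c (r : 'I_(size Bi)) := (nth (0, 0) Bi r).2 / (nth (0, 0) Bs (phi r)).2.
have hc (r : 'I_(size Bi)) : c r ^+ 2 <= 1.
  rewrite expr_le1 //; first by rewrite /c ler_pdivrMr // mul1r.
  by rewrite /c divr_ge0 // ltW.
exists (\matrix_(r, q) (if q == phi r then c r else 0)); split; last first.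
  by move=> p X; apply: frob_inj.
apply/matrixP => r j; rewrite !mxE (bigD1 (phi r)) //= big1 ?addr0; last first.
  by move=> q hq; rewrite !mxE (negbTE hq) mul0r.
by rewrite !mxE eqxx hkey /c mulrA divfK // gt_eqF.
Qed.

Lemma sub_single i (Hsi : 0 < s i) : (A i <= wf_strategy N s A [set i])%MS.
Proof.
apply/row_subP => r; case: (eqVneq (row r (A i)) 0) => [-> | hr]; first by rewrite sub0mx.
set v := row r (s i *: A i).
have hv : v != 0.
  apply: contra hr => /eqP hv0; apply/eqP/rowP => j.
  have := congr1 (fun M : 'rV_n => M 0 j) hv0; rewrite !mxE => /eqP.
  by rewrite mulf_eq0 (gt_eqF Hsi) /= => /eqP.
have vin : v \in wf_rows s A [set i].
  rewrite wf_rowsE enum_set1 /= cats0; apply/mapP; exists r => //.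
  by rewrite mem_filter hv mem_enum.
have hm := fold_mem N [::] vin.
set B := wf_buckets N s A [set i].
have [pB _ _ _] := bk_props [set i].
have hq : (index (nz N v) (map fst B) < size B)%N by rewrite -(size_map fst B) index_mem.
set q := Ordinal hq.
have hf : 0 < (nth (0, 0) B q).2 by have := allP pB _ (mem_nth (0, 0) hq).
have hNv := Npos' hv.
have -> : row r (A i) = ((s i)^-1 * N v / (nth (0, 0) B q).2) *: row q (wf_strategy N s A [set i]).
  apply/rowP => j; rewrite !mxE (nth_index_fst hm) /nz !mxE.
  field; rewrite ?gt_eqF //.
by rewrite scalemx_sub // row_sub.
Qed.
End Main.

Unset Implicit Arguments. Set Strict Implicit.

Theorem mainTheorem2 (R : realType) (n : nat) (N : 'rV[R]_n -> R)
  (HN : is_norm N) (eps : R) (Heps : 0 < eps)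
  (I : finType) (p k : I -> nat) (s : I -> R)
  (W : forall l : I, 'M[R]_(p l, n)) (A : forall l : I, 'M[R]_(k l, n))
  (S : {set I}) (HS : S != set0)
  (Hs : forall l, l \in S -> 0 < s l)
  (HWA : forall l, l \in S -> W l = W l *m mpinv (A l) *m A l)
  (Hcol : forall l, l \in S -> forall j : 'I_n, \sum_(r < k l) `|A l r j| = 1)
  (i : I) (Hi : i \in S) :
  Err N s A eps W S i <= Err N s A eps W [set i] i.
Proof.
have Hs1 : forall l, l \in [set i] -> 0 < s l by move=> l; rewrite inE => /eqP ->; apply: Hs.
have Hcol1 : forall l, l \in [set i] -> forall j : 'I_n, \sum_(r < k l) `|A l r j| = 1.
  by move=> l; rewrite inE => /eqP ->; apply: Hcol.
rewrite /Err /eps_S (norm1_wf HN Hs Hcol) (norm1_wf HN Hs1 Hcol1) big_set1.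
case: n N HN W A Hcol Hcol1 HWA => [|n'] N HN W A Hcol Hcol1 HWA.
  by rewrite expr0n /= mulr0 !mul0r.
set cS := \sum_(l in S) s l.
have hcS : 0 < cS.
  rewrite /cS (bigD1 i) //=; have h1 := Hs i Hi.
  have h2 : 0 <= \sum_(l in S | l != i) s l.
    by apply: sumr_ge0 => l /andP [hl _]; apply: ltW; apply: Hs.
  lra.
have hsi := Hs i Hi.
have K1 : 2 * cS ^+ 2 / (cS * eps) ^+ 2 = 2 / eps ^+ 2 by field; rewrite ?gt_eqF.
have K2 : 2 * s i ^+ 2 / (s i * eps) ^+ 2 = 2 / eps ^+ 2 by field; rewrite ?gt_eqF.
rewrite K1 K2; apply: ler_wpM2l; first by rewrite divr_ge0 // exprn_ge0 // ltW.
set Ai := wf_strategy N s A [set i]; set As := wf_strategy N s A S.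
have [D [hD hF]] := exists_D HN s A Hi.
have hsub := sub_single HN A hsi.
have [M hM] := submxP hsub.
set Z := W i *m mpinv (A i) *m M.
have hWZ : W i = Z *m Ai by rewrite /Z -mulmxA -hM -(HWA i Hi).
clearbody Z.
have hX : W i *m mpinv Ai *m Ai = W i.
  case: (mpinvP Ai) => h1 _ _ _.
  by rewrite {1}hWZ -!mulmxA (mulmxA Ai) h1 -hWZ.
set X := W i *m mpinv Ai.
have hY : X *m D *m As = W i by rewrite -mulmxA hD.
apply: le_trans (hF _ X).
rewrite -{1}hY; exact: minnorm (mpinvP As).
Qed.
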